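(* Let $\mathbf{L}'=(L;\vee,\wedge,{}',0,1)$ be an ortholattice with lattice reduct $\mathbf{L}$ and dual $\mathcal{D}(\mathbf{L}')=(P_{\mathbf{L}},E,\mathscr{T}_{\mathbf{L}},g)$. For $a\in L$ let $e_a$ be the partial map on $P_{\mathbf{L}}$ with $e_a(f)=f(a)$ if $a\in\mathrm{dom}f$ and undefined otherwise. Then $a\mapsto e_a$ is an ortholattice isomorphism from $\mathbf{L}'$ onto $\mathcal{E}(\mathcal{D}(\mathbf{L}'))=(\mathrm{MPM}(\mathcal{D}(\mathbf{L}')),\wedge,\vee,\varphi_0,\varphi_1,\neg)$; in particular $e_{a'}=\neg e_a$ for all $a\in L$, and $\mathbf{L}'\cong\mathcal{E}(\mathcal{D}(\mathbf{L}'))$.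
   Context: An ortholattice is a bounded lattice with an operation $'$ satisfying $a''=a$, $a\wedge a'=0$, $a\vee a'=1$ and the De Morgan laws. A partial homomorphism $\mathbf{L}\to\mathbf{2}$ is a partial map $f:L\to\{0,1\}$ whose domain is a $(0,1)$-sublattice and whose restriction is a $(0,1)$-homomorphism; an MPH is one with no proper extension; $P_{\mathbf{L}}$ is the set of MPHs. $(f,h)\in E$ iff $f(a)\le h(a)$ for all $a\in\mathrm{dom}f\cap\mathrm{dom}h$. $\mathscr{T}_{\mathbf{L}}$ has subbasis of closed sets $V_a=\{f: f(a)=0\}$, $W_a=\{f: f(a)=1\}$. $g(f)(a)=0$ if $f(a')=1$, $g(f)(a)=1$ if $f(a')=0$, undefined otherwise. A partial morphism from $(X,E,\mathscr{T})$ to $\underset{\sim}{2}_{\mathscr{T}}$ ($\{0,1\}$ with $\le$ and discrete topology) is a partial map $\varphi:X\to\{0,1\}$ with closed domain, with $\varphi(x)\le\varphi(y)$ whenever $x,y\in\mathrm{dom}\varphi$, $(x,y)\in E$, continuous on its domain; an MPM is one with no proper extension; $\mathrm{MPM}(\cdot)$ denotes the set of MPMs, ordered by $\varphi\le\psi$ iff $\varphi^{-1}(1)\subseteq\psi^{-1}(1)$, which makes it a bounded lattice with meet $\wedge$, join $\vee$, bounds $\varphi_0,\varphi_1$. For an MPM $\varphi$ of $(X,E,\mathscr{T},g)$, $\neg\varphi$ is the partial map with $(\neg\varphi)(x)=1$ if $\varphi(g(x))=0$, $(\neg\varphi)(x)=0$ if $\varphi(g(x))=1$, undefined otherwise. 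*)

(* Defs.v *)
From HB Require Import structures.
From mathcomp Require Import all_boot all_order.
Set Implicit Arguments. Unset Strict Implicit. Unset Printing Implicit Defensive.
Import Order.LTheory.
Local Open Scope order_scope.

Record orthocompl (d : Order.disp_t) (L : tbLatticeType d) := OrthoCompl {
  ocompl : L -> L;
  ocomplK : forall a, ocompl (ocompl a) = a;
  ocompl_meet : forall a, a `&` ocompl a = \bot;
  ocompl_join : forall a, a `|` ocompl a = \top;
  ocompl_dm_meet : forall a b, ocompl (a `&` b) = ocompl a `|` ocompl b;
  ocompl_dm_join : forall a b, ocompl (a `|` b) = ocompl a `&` ocompl b }.

(* partial maps T -> {0,1} are T -> option bool (None = undefined) *)
Definition pext (T : Type) (f h : T -> option bool) :=
  forall t x, f t = Some x -> h t = Some x.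

Definition is_ph d (L : tbLatticeType d) (f : L -> option bool) :=
  f \bot = Some false /\ f \top = Some true /\
  forall a b x y, f a = Some x -> f b = Some y ->
    f (a `&` b) = Some (x && y) /\ f (a `|` b) = Some (x || y).

Definition is_mph d (L : tbLatticeType d) (f : L -> option bool) :=
  is_ph f /\ forall h, is_ph h -> pext f h -> pext h f.

Definition PL d (L : tbLatticeType d) := {f : L -> option bool | is_mph f}.

Definition Erel d (L : tbLatticeType d) (f h : PL L) : Prop :=
  forall a x y, sval f a = Some x -> sval h a = Some y -> x ==> y.

(* closed sets of the topology generated by a subbasis S of closed sets:
   the smallest family containing S and closed under finite unions (incl. the
   empty one) and arbitrary intersections (incl. the empty one); it is taken
   extensional. *)
Definition gen_closed (X : Type) (S : (X -> Prop) -> Prop) (C : X -> Prop) :=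
  forall F : (X -> Prop) -> Prop,
    (forall A B, (forall x, A x <-> B x) -> F A -> F B) ->
    (forall A, S A -> F A) ->
    F (fun _ => False) ->
    (forall A B, F A -> F B -> F (fun x => A x \/ B x)) ->
    (forall G : (X -> Prop) -> Prop, (forall A, G A -> F A) ->
        F (fun x => forall A, G A -> A x)) ->
    F C.

Definition VL d (L : tbLatticeType d) (a : L) : PL L -> Prop :=
  fun f => sval f a = Some false.
Definition WL d (L : tbLatticeType d) (a : L) : PL L -> Prop :=
  fun f => sval f a = Some true.

Definition subbasisL d (L : tbLatticeType d) (A : PL L -> Prop) : Prop :=
  exists a : L, A = VL a \/ A = WL a.

Definition closedL d (L : tbLatticeType d) : (PL L -> Prop) -> Prop :=
  gen_closed (@subbasisL d L).

Definition gmap d (L : tbLatticeType d) (o : orthocompl L)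
  (f : L -> option bool) : L -> option bool :=
  fun a => omap negb (f (ocompl o a)).

Section GLemmas.
Variables (d : Order.disp_t) (L : tbLatticeType d) (o : orthocompl L).
Local Notation c := (ocompl o).

Lemma ocompl0 : c \bot = \top.
Proof. by rewrite -(join0x (c \bot)) ocompl_join. Qed.
Lemma ocompl1 : c \top = \bot.
Proof. by rewrite -(meet1x (c \top)) ocompl_meet. Qed.

Lemma gmapK f a : gmap o (gmap o f) a = f a.
Proof. by rewrite /gmap ocomplK; case: (f a) => //= b; rewrite negbK. Qed.

Lemma gmap_Some f a x : gmap o f a = Some x <-> f (c a) = Some (~~ x).
Proof.
rewrite /gmap; case: (f (c a)) => [b|] //=; split => [[<-]|[->]];
  by rewrite ?negbK.
Qed.

Lemma gmap_ph f : is_ph f -> is_ph (gmap o f).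
Proof.
move=> [f0 [f1 fab]]; split; first by rewrite /gmap ocompl0 f1.
split; first by rewrite /gmap ocompl1 f0.
move=> a b x y /gmap_Some ha /gmap_Some hb.
have [hm hj] := fab _ _ _ _ ha hb.
split; apply/gmap_Some.
  by rewrite ocompl_dm_meet hj negb_and.
by rewrite ocompl_dm_join hm negb_or.
Qed.

Lemma gmap_ext f h : pext f h -> pext (gmap o f) (gmap o h).
Proof. by move=> fh a x /gmap_Some /fh /gmap_Some. Qed.

Lemma gmap_mph f : is_mph f -> is_mph (gmap o f).
Proof.
move=> [phf maxf]; split; first exact: gmap_ph.
move=> h phh fh.
have e1 : pext f (gmap o h).
  move=> a x fa; apply: (gmap_ext fh); by rewrite gmapK.
have e2 := maxf _ (gmap_ph phh) e1.
move=> a x ha; have := gmap_ext e2 (x := x) (t := a).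
by rewrite gmapK; apply.
Qed.
End GLemmas.

Definition gL d (L : tbLatticeType d) (o : orthocompl L) (f : PL L) : PL L :=
  exist _ (gmap o (sval f)) (gmap_mph o (svalP f)).

(* partial morphisms from (X, E, closed sets cl) to 2_T (discrete, with <=):
   closed domain, order preserving on the domain, continuous on the domain
   (every preimage of a subset of {0,1} is open in the subspace dom phi) *)
Definition is_pm (X : Type) (E : X -> X -> Prop) (cl : (X -> Prop) -> Prop)
  (phi : X -> option bool) :=
  cl (fun x => phi x <> None) /\
  (forall x y u v, E x y -> phi x = Some u -> phi y = Some v -> u ==> v) /\
  (forall U : bool -> Prop, exists K : X -> Prop, cl K /\
     forall x, phi x <> None ->
       ((exists b, phi x = Some b /\ U b) <-> ~ K x)).

Definition is_mpm (X : Type) (E : X -> X -> Prop) (cl : (X -> Prop) -> Prop)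
  (phi : X -> option bool) :=
  is_pm E cl phi /\ forall psi, is_pm E cl psi -> pext phi psi -> pext psi phi.

Definition mpm_le (X : Type) (phi psi : X -> option bool) :=
  forall x, phi x = Some true -> psi x = Some true.

Definition is_glb (X : Type) (M : (X -> option bool) -> Prop)
  (phi psi chi : X -> option bool) :=
  M chi /\ mpm_le chi phi /\ mpm_le chi psi /\
  forall th, M th -> mpm_le th phi -> mpm_le th psi -> mpm_le th chi.
Definition is_lub (X : Type) (M : (X -> option bool) -> Prop)
  (phi psi chi : X -> option bool) :=
  M chi /\ mpm_le phi chi /\ mpm_le psi chi /\
  forall th, M th -> mpm_le phi th -> mpm_le psi th -> mpm_le chi th.

Definition pneg (X : Type) (g : X -> X) (phi : X -> option bool) : X -> option bool :=
  fun x => omap negb (phi (g x)).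

Definition eL d (L : tbLatticeType d) (a : L) : PL L -> option bool :=
  fun f => sval f a.

(* Main.v *)
Require Import Defs.
From mathcomp Require Import all_boot all_order.
From mathcomp Require Import boolp classical_sets.
Set Implicit Arguments. Unset Strict Implicit. Unset Printing Implicit Defensive.
Import Order.LTheory.
Local Open Scope order_scope.

Section Basics.
Variables (d : Order.disp_t) (L : tbLatticeType d).

Definition psub (P P' : L -> Prop) := forall x, P x -> P' x.

Lemma pair_zorn (Q : (L -> Prop) -> (L -> Prop) -> Prop) (P0 N0 : L -> Prop) :
  Q P0 N0 ->
  (forall (I : Type) (Ps Ns : I -> L -> Prop), I -> (forall i, Q (Ps i) (Ns i)) ->
     (forall i j, (psub (Ps i) (Ps j) /\ psub (Ns i) (Ns j)) \/
                  (psub (Ps j) (Ps i) /\ psub (Ns j) (Ns i))) ->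
     Q (fun x => exists i, Ps i x) (fun x => exists i, Ns i x)) ->
  exists P N, Q P N /\ psub P0 P /\ psub N0 N /\
    forall P' N', Q P' N' -> psub P P' -> psub N N' -> psub P' P /\ psub N' N.
Proof.
move=> Q0 Qch.
pose T := {p : (L -> Prop) * (L -> Prop) | Q p.1 p.2 /\ psub P0 p.1 /\ psub N0 p.2}.
pose R' (p q : T) := psub (sval p).1 (sval q).1 /\ psub (sval p).2 (sval q).2.
have t0 : T by exists (P0, N0); split; [exact: Q0|split => x hx].
have [| | |t tmax] := @ZL_preorder T t0 (fun p q => `[< R' p q >]).
- by move=> t; apply/asboolP; split.
- move=> r s t /asboolP [h1 h2] /asboolP [h3 h4]; apply/asboolP.
  by split => x hx; [apply: h3; apply: h1|apply: h4; apply: h2].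
- move=> A Atot.
  pose I := option {p : T | A p}.
  pose Ps (i : I) := if i is Some p then (sval (sval p)).1 else P0.
  pose Ns (i : I) := if i is Some p then (sval (sval p)).2 else N0.
  have hQ : Q (fun x => exists i, Ps i x) (fun x => exists i, Ns i x).
    apply: Qch; first exact: None.
    - by case=> [[[p hp] _]|] //=; case: hp.
    - case=> [[[p hp] Ap]|]; case=> [[[q hq] Aq]|] /=.
      + have [/asboolP [h1 h2]|/asboolP [h1 h2]] := Atot _ _ Ap Aq; [left|right]; done.
      + by right; have [_ [? ?]] := hp.
      + by left; have [_ [? ?]] := hq.
      + by left; split => x.
  have hT : Q (fun x => exists i, Ps i x) (fun x => exists i, Ns i x) /\
     psub P0 (fun x => exists i, Ps i x) /\ psub N0 (fun x => exists i, Ns i x).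
    by split => //; split => x hx; exists None.
  exists (exist _ (_, _) hT) => s As; apply/asboolP; split => x hx /=.
    by exists (Some (exist _ s As)).
  by exists (Some (exist _ s As)).
- case: t tmax => [[P N] hh] tmax; have [hQ [h0 h1]] := hh.
  exists P, N; split => //; split => //; split => //.
  move=> P' N' hQ' hP hN.
  have hT : Q (P', N').1 (P', N').2 /\ psub P0 (P', N').1 /\ psub N0 (P', N').2.
    by split => //; split => x hx; [apply: hP; apply: h0|apply: hN; apply: h1].
  by have /asboolP[] := tmax (exist _ (P', N') hT) (asboolT (conj hP hN)).
Qed.

Definition filt (P : L -> Prop) := P \top /\ (forall x y, P x -> P y -> P (x `&` y)) /\
  (forall x y, P x -> x <= y -> P y).
Definition idl (N : L -> Prop) := N \bot /\ (forall x y, N x -> N y -> N (x `|` y)) /\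
  (forall x y, N y -> x <= y -> N x).
Definition disj (P N : L -> Prop) := forall x, P x -> N x -> False.

Definition pmap (P N : L -> Prop) : L -> option bool :=
  fun x => if pselect (P x) then Some true else if pselect (N x) then Some false else None.

Lemma pmap_true P N x : pmap P N x = Some true <-> P x.
Proof. rewrite /pmap; destruct (pselect (P x)) as [h|h]; first by split.
by destruct (pselect (N x)); split. Qed.

Lemma pmap_false P N x : disj P N -> (pmap P N x = Some false <-> N x).
Proof.
move=> hd; rewrite /pmap; destruct (pselect (P x)) as [hp|hp].
  by split => // hn; case: (hd _ hp hn).
by destruct (pselect (N x)).
Qed.

Lemma pmap_ph P N : filt P -> idl N -> disj P N -> is_ph (pmap P N).
Proof.
move=> [P1 [PI PU]] [N0 [NU ND]] hd.
split; first by apply/pmap_false.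
split; first by apply/pmap_true.
move=> a b x y ha hb.
have tr z : pmap P N z = Some true <-> P z := pmap_true P N z.
have fl z : pmap P N z = Some false <-> N z := pmap_false z hd.
case: x ha => [/tr ha|/fl ha]; case: y hb => [/tr hb|/fl hb] /=; split.
- by apply/tr; apply: PI.
- by apply/tr; apply: PU ha _; apply: leUl.
- by apply/fl; apply: ND hb _; apply: leIr.
- by apply/tr; apply: PU ha _; apply: leUl.
- by apply/fl; apply: ND ha _; apply: leIl.
- by apply/tr; apply: PU hb _; apply: leUr.
- by apply/fl; apply: ND ha _; apply: leIl.
- by apply/fl; apply: NU.
Qed.

Definition upc (f : L -> option bool) : L -> Prop := fun x : L => exists y : L, f y = Some true /\ y <= x.
Definition dnc (f : L -> option bool) : L -> Prop := fun x : L => exists y : L, f y = Some false /\ x <= y.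

Lemma ph_nle (f : L -> option bool) (a b : L) : is_ph f -> f a = Some true -> f b = Some false -> a <= b -> False.
Proof.
move=> [_ [_ H]] ha hb hab.
have [hm _] := H _ _ _ _ ha hb.
by move: hm; rewrite (meet_idPl hab) ha.
Qed.

Lemma upc_filt (f : L -> option bool) : is_ph f -> filt (upc f).
Proof.
move=> hf; have [_ [f1 H]] := hf.
split; first by exists \top.
split.
  move=> x y [x' [hx lx]] [y' [hy ly]]; exists (x' `&` y'); split.
    by have [-> _] := H _ _ _ _ hx hy.
  by rewrite lexI (le_trans (leIl _ _) lx) (le_trans (leIr _ _) ly).
by move=> x y [z [hz lz]] lxy; exists z; split => //; apply: le_trans lxy.
Qed.

Lemma dnc_idl (f : L -> option bool) : is_ph f -> idl (dnc f).
Proof.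
move=> hf; have [f0 [_ H]] := hf.
split; first by exists \bot.
split.
  move=> x y [x' [hx lx]] [y' [hy ly]]; exists (x' `|` y'); split.
    by have [_ ->] := H _ _ _ _ hx hy.
  by rewrite leUx (le_trans lx (leUl _ _)) (le_trans ly (leUr _ _)).
by move=> x y [z [hz lz]] lxy; exists z; split => //; apply: le_trans lz.
Qed.

Lemma upc_dnc_disj (f : L -> option bool) : is_ph f -> disj (upc f) (dnc f).
Proof.
move=> hf x [a [ha la]] [b [hb lb]].
by apply: (ph_nle hf ha hb); apply: le_trans lb.
Qed.

Lemma mph_filt (f : L -> option bool) : is_mph f -> filt (fun x => f x = Some true).
Proof.
move=> [hf hmax].
have hp := pmap_ph (upc_filt hf) (dnc_idl hf) (upc_dnc_disj hf).
have ext : pext f (pmap (upc f) (dnc f)).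
  move=> t [] ht.
    by apply/pmap_true; exists t.
  by apply/(pmap_false _ (upc_dnc_disj hf)); exists t.
have := hmax _ hp ext => back.
have [_ [f1 H]] := hf.
split => //; split.
  by move=> x y hx hy; have [-> _] := H _ _ _ _ hx hy.
move=> x y hx lxy; apply: back; apply/pmap_true; by exists x.
Qed.

Lemma mph_idl (f : L -> option bool) : is_mph f -> idl (fun x => f x = Some false).
Proof.
move=> [hf hmax].
have hp := pmap_ph (upc_filt hf) (dnc_idl hf) (upc_dnc_disj hf).
have ext : pext f (pmap (upc f) (dnc f)).
  move=> t [] ht.
    by apply/pmap_true; exists t.
  by apply/(pmap_false _ (upc_dnc_disj hf)); exists t.
have := hmax _ hp ext => back.
have [f0 [_ H]] := hf.
split => //; split.
  by move=> x y hx hy; have [_ ->] := H _ _ _ _ hx hy.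
move=> x y hy lxy; apply: back; apply/(pmap_false _ (upc_dnc_disj hf)); by exists y.
Qed.

Lemma chain_filt (I : Type) (Ps Ns : I -> L -> Prop) : I -> (forall i, filt (Ps i)) ->
  (forall i j, (psub (Ps i) (Ps j) /\ psub (Ns i) (Ns j)) \/
               (psub (Ps j) (Ps i) /\ psub (Ns j) (Ns i))) ->
  filt (fun x => exists i, Ps i x).
Proof.
move=> i0 hf hc; split; first by exists i0; case: (hf i0).
split.
  move=> x y [i hi] [j hj].
  have [[h _]|[h _]] := hc i j.
    by exists j; case: (hf j) => _ [hI _]; apply: hI => //; apply: h.
  by exists i; case: (hf i) => _ [hI _]; apply: hI => //; apply: h.
by move=> x y [i hi] lxy; exists i; case: (hf i) => _ [_ hU]; apply: hU lxy.
Qed.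

Lemma chain_idl (I : Type) (Ps Ns : I -> L -> Prop) : I -> (forall i, idl (Ns i)) ->
  (forall i j, (psub (Ps i) (Ps j) /\ psub (Ns i) (Ns j)) \/
               (psub (Ps j) (Ps i) /\ psub (Ns j) (Ns i))) ->
  idl (fun x => exists i, Ns i x).
Proof.
move=> i0 hf hc; split; first by exists i0; case: (hf i0).
split.
  move=> x y [i hi] [j hj].
  have [[_ h]|[_ h]] := hc i j.
    by exists j; case: (hf j) => _ [hI _]; apply: hI => //; apply: h.
  by exists i; case: (hf i) => _ [hI _]; apply: hI => //; apply: h.
by move=> x y [i hi] lxy; exists i; case: (hf i) => _ [_ hU]; apply: hU lxy.
Qed.

Lemma mph_ext (P0 N0 : L -> Prop) : filt P0 -> idl N0 -> disj P0 N0 ->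
  exists f : PL L, psub P0 (fun x => sval f x = Some true) /\
                   psub N0 (fun x => sval f x = Some false).
Proof.
move=> hP hN hd.
have hch : forall (I : Type) (Ps Ns : I -> L -> Prop), I ->
  (forall i, filt (Ps i) /\ idl (Ns i) /\ disj (Ps i) (Ns i)) ->
  (forall i j, (psub (Ps i) (Ps j) /\ psub (Ns i) (Ns j)) \/
                  (psub (Ps j) (Ps i) /\ psub (Ns j) (Ns i))) ->
  filt (fun x => exists i, Ps i x) /\ idl (fun x => exists i, Ns i x) /\
  disj (fun x => exists i, Ps i x) (fun x => exists i, Ns i x).
  move=> I Ps Ns i0 hQ hc; split; first by apply: chain_filt i0 _ hc => i; case: (hQ i).
  split; first by apply: chain_idl i0 _ hc => i; case: (hQ i) => _ [].
  move=> x [i hi] [j hj]; have [[h _]|[_ h]] := hc i j.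
    by case: (hQ j) => _ [_ hdj]; apply: (hdj x) => //; apply: h.
  by case: (hQ i) => _ [_ hdi]; apply: (hdi x) => //; apply: h.
have [P [N [[hP' [hN' hd']] [s0 [s1 hmax]]]]] :=
  @pair_zorn (fun P N => filt P /\ idl N /\ disj P N) P0 N0 (conj hP (conj hN hd)) hch.
have hph := pmap_ph hP' hN' hd'.
have hm : is_mph (pmap P N).
  split => // h hh ext.
  have hu := upc_filt hh; have hdn := dnc_idl hh; have hdd := upc_dnc_disj hh.
  have [sP sN] : psub (upc h) P /\ psub (dnc h) N.
    apply: hmax => //.
      by move=> x hx; exists x; split => //; apply: ext; apply/pmap_true.
    by move=> x hx; exists x; split => //; apply: ext; apply/(pmap_false _ hd').
  move=> t [] ht.
    by apply/pmap_true; apply: sP; exists t.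
  by apply/(pmap_false _ hd'); apply: sN; exists t.
exists (exist _ _ hm) => /=; split => x hx.
  by apply/pmap_true; apply: s0.
by apply/(pmap_false _ hd'); apply: s1.
Qed.

End Basics.

Section Topo.
Variables (d : Order.disp_t) (L : tbLatticeType d).
Local Notation cl := (@closedL d L).
Local Notation X := (PL L).
Definition Ft (k : X) (x : L) := sval k x = Some true.
Definition It (k : X) (x : L) := sval k x = Some false.

Lemma cl_ext (A B : X -> Prop) : cl A -> (forall x, A x <-> B x) -> cl B.
Proof. by move=> hA hAB F hext hS h0 hU hI; apply: (hext A) => //; apply: hA. Qed.

Lemma cl_V a : cl (VL a).
Proof. by move=> F hext hS h0 hU hI; apply: hS; exists a; left. Qed.
Lemma cl_W a : cl (WL a).
Proof. by move=> F hext hS h0 hU hI; apply: hS; exists a; right. Qed.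
Lemma cl_empty : cl (fun _ => False).
Proof. by move=> F hext hS h0 hU hI. Qed.
Lemma cl_union (A B : X -> Prop) : cl A -> cl B -> cl (fun x => A x \/ B x).
Proof.
move=> hA hB F hext hS h0 hU hI; exact: (hU _ _ (hA F hext hS h0 hU hI) (hB F hext hS h0 hU hI)).
Qed.
Lemma cl_inter (G : (X -> Prop) -> Prop) : (forall A, G A -> cl A) ->
  cl (fun x => forall A, G A -> A x).
Proof.
move=> hG F hext hS h0 hU hI; apply: (hI G) => A hA; exact: (hG A hA F hext hS h0 hU hI).
Qed.
Lemma cl_and (A B : X -> Prop) : cl A -> cl B -> cl (fun x => A x /\ B x).
Proof.
move=> hA hB.
apply: (@cl_ext (fun x => forall C, (C = A \/ C = B) -> C x)).
  by apply: cl_inter => C [->|->].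
move=> x; split.
  by move=> H; split; apply: H; [left|right].
by case=> ha hb C [->|->].
Qed.
Lemma cl_full : cl (fun _ => True).
Proof.
apply: (@cl_ext (fun x => forall C, False -> C x)); first by apply: cl_inter.
by [].
Qed.
Lemma cl_prop (Q : Prop) (A : X -> Prop) : cl A -> cl (fun x => Q /\ A x).
Proof.
move=> hA; case: (pselect Q) => hQ.
  by apply: cl_ext hA _ => x; split => // [[]].
by apply: cl_ext cl_empty _ => x; split => // [[]].
Qed.

Lemma pext_eq (f k : X) : pext (sval f) (sval k) -> k = f.
Proof.
move: f k => [f hf] [k hk] /= H.
have H2 := (proj2 hf) k (proj1 hk) H.
apply: eq_exist; apply: funext => t.
case E: (f t) => [x|]; first by apply: H.
by case E2: (k t) => [y|] //; rewrite (H2 _ _ E2) in E.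
Qed.

Lemma cl_single (f : X) : cl (fun k => k = f).
Proof.
pose G (A : X -> Prop) := exists c, (sval f c = Some true /\ A = WL c) \/
                                    (sval f c = Some false /\ A = VL c).
apply: (@cl_ext (fun x => forall A, G A -> A x)).
  by apply: cl_inter => A [c [[_ ->]|[_ ->]]]; [apply: cl_W|apply: cl_V].
move=> k; split.
  move=> H; apply: pext_eq => t [] ht.
    by apply: (H (WL t)); exists t; left.
  by apply: (H (VL t)); exists t; right.
by move=> -> A [c [[hc ->]|[hc ->]]].
Qed.

Lemma nnpp (P : Prop) : ~ ~ P -> P.
Proof. by case: (pselect P) => // h1 h2; case: h2. Qed.

Fixpoint satc (k : X) (c : seq (bool * L)) : Prop :=
  match c with [::] => False | l :: c' => sval k l.2 = Some l.1 \/ satc k c' end.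
Definition sat (Cl : seq (bool * L) -> Prop) (k : X) := forall c, Cl c -> satc k c.

Lemma satc_cat k c1 c2 : satc k (c1 ++ c2) <-> satc k c1 \/ satc k c2.
Proof.
elim: c1 => [|l c1 IH] /=; first by split => [h|[[]|h]] //; right.
rewrite IH; tauto.
Qed.

Lemma cnf (A : X -> Prop) : cl A -> exists Cl, forall x, A x <-> sat Cl x.
Proof.
move=> hA; apply: (hA (fun A => exists Cl, forall x, A x <-> sat Cl x)).
- move=> A1 B1 hAB [Cl hCl]; exists Cl => x; rewrite -hCl; split; apply hAB.
- move=> A1 [a [->|->]].
    exists (fun c => c = [:: (false, a)]) => x; split.
      by move=> h c ->; left.
    by move=> h; case: (h _ erefl).
  exists (fun c => c = [:: (true, a)]) => x; split.
    by move=> h c ->; left.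
  by move=> h; case: (h _ erefl).
- exists (fun c => c = [::]) => x; split => // h; exact: (h _ erefl).
- move=> A1 B1 [C1 h1] [C2 h2].
  exists (fun c => exists c1 c2, C1 c1 /\ C2 c2 /\ c = c1 ++ c2) => x; split.
    move=> hx c [c1 [c2 [hc1 [hc2 ->]]]]; apply/satc_cat.
    case: hx => [/h1 hx|/h2 hx]; [left; exact: hx|right; exact: hx].
  move=> H; case: (pselect (sat C1 x)) => hs1; first by left; apply/h1.
  right; apply/h2 => c2 hc2.
  have [c1 hc1] : exists c1, C1 c1 /\ ~ satc x c1.
    apply: nnpp => nn; apply: hs1 => c hc; apply: nnpp => ns; apply: nn; by exists c.
  have := H (c1 ++ c2) (ex_intro _ c1 (ex_intro _ c2 (conj (proj1 hc1) (conj hc2 erefl)))).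
  by case/satc_cat => // h; case: (proj2 hc1).
- move=> G hG.
  exists (fun c => exists A1 Cl', G A1 /\ (forall x, A1 x <-> sat Cl' x) /\ Cl' c) => x; split.
    by move=> H c [A1 [Cl' [hG1 [hA1 hc]]]]; apply: (proj1 (hA1 x)) => //; apply: H.
  move=> H A1 hG1; have [Cl' hCl'] := hG _ hG1.
  apply/hCl' => c hc; apply: H; exists A1, Cl'; split => //.
Qed.

End Topo.

Section Compact.
Variables (d : Order.disp_t) (L : tbLatticeType d).
Local Notation X := (PL L).

Lemma Ffilt (k : X) : filt (Ft k).
Proof. exact: (mph_filt (svalP k)). Qed.
Lemma Iidl (k : X) : idl (It k).
Proof. exact: (mph_idl (svalP k)). Qed.

Definition litin (P N : L -> Prop) (l : bool * L) := if l.1 then P l.2 else N l.2.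
Fixpoint inc (P N : L -> Prop) (c : seq (bool * L)) : Prop :=
  match c with [::] => False | l :: c' => litin P N l \/ inc P N c' end.

Lemma compact (Cl : seq (bool * L) -> Prop) (S T : L -> Prop) : filt S -> idl T ->
  (forall s t, S s -> T t -> exists k : X, sat Cl k /\ Ft k s /\ It k t) ->
  exists k : X, sat Cl k /\ psub S (Ft k) /\ psub T (It k).
Proof.
move=> hS hT hG.
pose Good (P N : L -> Prop) := forall s t, P s -> N t -> exists k : X, sat Cl k /\ Ft k s /\ It k t.
have hch : forall (I : Type) (Ps Ns : I -> L -> Prop), I ->
  (forall i, filt (Ps i) /\ idl (Ns i) /\ Good (Ps i) (Ns i)) ->
  (forall i j, (psub (Ps i) (Ps j) /\ psub (Ns i) (Ns j)) \/
                  (psub (Ps j) (Ps i) /\ psub (Ns j) (Ns i))) ->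
  filt (fun x => exists i, Ps i x) /\ idl (fun x => exists i, Ns i x) /\
  Good (fun x => exists i, Ps i x) (fun x => exists i, Ns i x).
  move=> I Ps Ns i0 hQ hc; split; first by apply: chain_filt i0 _ hc => i; case: (hQ i).
  split; first by apply: chain_idl i0 _ hc => i; case: (hQ i) => _ [].
  move=> s t [i hi] [j hj]; have [[h _]|[_ h]] := hc i j.
    by case: (hQ j) => _ [_ hdj]; apply: (hdj s t) => //; apply: h.
  by case: (hQ i) => _ [_ hdi]; apply: (hdi s t) => //; apply: h.
have [P [N [[hP [hN hGood]] [sP0 [sN0 hmax]]]]] :=
  @pair_zorn _ _ (fun P N => filt P /\ idl N /\ Good P N) S T (conj hS (conj hT hG)) hch.
have [P1 [PI PU]] := hP; have [N0 [NU ND]] := hN.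
have stepT : forall x, ~ P x -> exists s1 t1, P s1 /\ N t1 /\
    forall k : X, sat Cl k -> Ft k s1 -> It k t1 -> Ft k x -> False.
  move=> x hx; apply: nnpp => H; apply: hx.
  pose P' y := exists p, P p /\ p `&` x <= y.
  have fP' : filt P'.
    split; first by exists \top; split => //; apply: lex1.
    split.
      move=> y1 y2 [p1 [hp1 l1]] [p2 [hp2 l2]]; exists (p1 `&` p2); split; first exact: PI.
      rewrite lexI; apply/andP; split.
        apply: le_trans l1; rewrite lexI leIr andbT; apply: le_trans (leIl _ _) (leIl _ _).
      apply: le_trans l2; rewrite lexI leIr andbT; apply: le_trans (leIl _ _) (leIr _ _).
    by move=> y1 y2 [p [hp l]] l12; exists p; split => //; apply: le_trans l12.
  have gP' : Good P' N.
    move=> s t [p [hp lp]] ht; apply: nnpp => nk; apply: H; exists p, t; split => //; split => //.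
    move=> k hk hkp hkt hkx; apply: nk; exists k; split => //; split => //.
    have [_ [kI kU]] := Ffilt k; apply: kU lp; exact: kI.
  have [sP _] := hmax P' N (conj fP' (conj hN gP')) (fun p hp => ex_intro _ p (conj hp (leIl _ _)))
                  (fun y hy => hy).
  by apply: sP; exists \top; split => //; apply: leIr.
have stepF : forall x, ~ N x -> exists s1 t1, P s1 /\ N t1 /\
    forall k : X, sat Cl k -> Ft k s1 -> It k t1 -> It k x -> False.
  move=> x hx; apply: nnpp => H; apply: hx.
  pose N' y := exists n, N n /\ y <= n `|` x.
  have iN' : idl N'.
    split; first by exists \bot; split => //; apply: le0x.
    split.
      move=> y1 y2 [n1 [hn1 l1]] [n2 [hn2 l2]]; exists (n1 `|` n2); split; first exact: NU.
      rewrite leUx; apply/andP; split.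
        apply: le_trans l1 _; rewrite leUx leUr andbT; apply: le_trans (leUl _ _) (leUl _ _).
      apply: le_trans l2 _; rewrite leUx leUr andbT; apply: le_trans (leUr _ _) (leUl _ _).
    by move=> y1 y2 [n [hn l]] l12; exists n; split => //; apply: le_trans l.
  have gN' : Good P N'.
    move=> s t hs [n [hn ln]]; apply: nnpp => nk; apply: H; exists s, n; split => //; split => //.
    move=> k hk hks hkn hkx; apply: nk; exists k; split => //; split => //.
    have [_ [kU kD]] := Iidl k; apply: kD ln; exact: kU.
  have [_ sN] := hmax P N' (conj hP (conj iN' gN')) (fun y hy => hy)
                  (fun n hn => ex_intro _ n (conj hn (leUl _ _))).
  by apply: sN; exists \bot; split => //; apply: leUr.
have claim : forall c, ~ inc P N c -> exists s t, P s /\ N t /\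
    forall k : X, sat Cl k -> Ft k s -> It k t -> ~ satc k c.
  elim=> [|[b x] c IH] /= hc.
    by exists \top, \bot; split => //; split => //.
  have [s2 [t2 [hs2 [ht2 H2]]]] := IH (fun h => hc (or_intror h)).
  have [s1 [t1 [hs1 [ht1 H1]]]] : exists s1 t1, P s1 /\ N t1 /\
      forall k : X, sat Cl k -> Ft k s1 -> It k t1 -> sval k x = Some b -> False.
    case: b hc => hc.
      by apply: stepT => h; apply: hc; left.
    by apply: stepF => h; apply: hc; left.
  exists (s1 `&` s2), (t1 `|` t2); split; first exact: PI.
  split; first exact: NU.
  move=> k hk hks hkt.
  have [_ [_ kU]] := Ffilt k; have [_ [_ kD]] := Iidl k.
  have hk1 : Ft k s1 by apply: kU hks _; apply: leIl.
  have hk2 : Ft k s2 by apply: kU hks _; apply: leIr.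
  have hk3 : It k t1 by apply: kD hkt _; apply: leUl.
  have hk4 : It k t2 by apply: kD hkt _; apply: leUr.
  case=> [h|h]; [exact: (H1 k hk hk1 hk3 h)|exact: (H2 k hk hk2 hk4 h)].
have hdis : disj P N.
  move=> x hx1 hx2; have [k [_ [h1 h2]]] := hGood x x hx1 hx2.
  by move: h1; rewrite /Ft h2.
have [k [hkP hkN]] := mph_ext hP hN hdis.
exists k; split; last by split => x hx; [apply: hkP; apply: sP0|apply: hkN; apply: sN0].
move=> c hc; apply: nnpp => nsat.
have hinc : inc P N c.
  apply: nnpp => ninc; have [s [t [hs [ht H]]]] := claim c ninc.
  have [k' [hk' [h1 h2]]] := hGood s t hs ht.
  exact: (H k' hk' h1 h2 (hk' c hc)).
apply: nsat; elim: c hinc {hc} => [|[b x] c IH] //= [h|h]; last by right; apply: IH.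
by left; case: b h => h; [apply: hkP|apply: hkN].
Qed.

End Compact.

Section Main.
Variables (d : Order.disp_t) (L : tbLatticeType d).
Local Notation X := (PL L).
Local Notation cl := (@closedL d L).
Local Notation E := (@Erel d L).

Lemma Erel_refl (f : X) : E f f.
Proof. by move=> a x y -> [->]; apply/implyP. Qed.

Lemma Erel_F (f k g : X) : psub (Ft f) (Ft k) -> E k g -> E f g.
Proof.
move=> h hkg a [] y hf hg //; apply: (hkg a true y) => //; exact: h.
Qed.

Lemma Erel_I (f g k : X) : psub (It g) (It k) -> E f k -> E f g.
Proof.
move=> h hfk a x [] hf hg; first by case: x hf.
by apply: (hfk a x false) => //; apply: h.
Qed.

Lemma Erel_ofF (f g : X) : psub (Ft f) (Ft g) -> E f g.
Proof. by move=> h; apply: Erel_F h (Erel_refl (f:=g)). Qed.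
Lemma Erel_ofI (f g : X) : psub (It g) (It f) -> E f g.
Proof. by move=> h; apply: Erel_I h (Erel_refl (f:=f)). Qed.

Lemma pm_of (psi : X -> option bool) : cl (fun x => psi x = Some true) ->
  cl (fun x => psi x = Some false) ->
  (forall x y u v, E x y -> psi x = Some u -> psi y = Some v -> u ==> v) ->
  is_pm E cl psi.
Proof.
move=> hA hB hord; split.
  apply: cl_ext (cl_union hA hB) _ => x; case: (psi x) => [[]|]; split => //; by [left|right|case].
split => // U.
exists (fun x => (~ U true /\ psi x = Some true) \/ (~ U false /\ psi x = Some false)).
split; first by apply: cl_union; apply: cl_prop.
move=> x; case: (psi x) => [[]|] // _; split.
- by move=> [b [[<-] hb]] [[hn _]|[_ //]]; apply: hn.
- by move=> h; exists true; split => //; apply: nnpp => hn; apply: h; left.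
- by move=> [b [[<-] hb]] [[_ //]|[hn _]]; apply: hn.
- by move=> h; exists false; split => //; apply: nnpp => hn; apply: h; right.
Qed.

Lemma pm_cl (psi : X -> option bool) : is_pm E cl psi ->
  cl (fun x => psi x = Some true) /\ cl (fun x => psi x = Some false).
Proof.
move=> [hD [_ hU]].
have [K1 [hK1 H1]] := hU (fun b => b = false).
have [K2 [hK2 H2]] := hU (fun b => b = true).
split.
  apply: cl_ext (cl_and hD hK1) _ => x; split.
    case=> hx hk; case E1: (psi x) hx => [[]|] // _.
      have dx : psi x <> None by rewrite E1.
      exfalso; exact: ((proj1 (H1 x dx)) (ex_intro _ false (conj E1 erefl)) hk).
  move=> hx; have dx : psi x <> None by rewrite hx.
  split => //; apply: nnpp => hk; have [b [hb hbf]] := proj2 (H1 x dx) hk.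
  by rewrite hx hbf in hb.
apply: cl_ext (cl_and hD hK2) _ => x; split.
  case=> hx hk; case E1: (psi x) hx => [[]|] // _.
    have dx : psi x <> None by rewrite E1.
    exfalso; exact: ((proj1 (H2 x dx)) (ex_intro _ true (conj E1 erefl)) hk).
move=> hx; have dx : psi x <> None by rewrite hx.
split => //; apply: nnpp => hk; have [b [hb hbf]] := proj2 (H2 x dx) hk.
by rewrite hx hbf in hb.
Qed.

Lemma eL_pm (a : L) : is_pm E cl (eL a).
Proof.
apply: pm_of; [exact: cl_W|exact: cl_V|].
by move=> x y u v hxy hu hv; apply: (hxy a).
Qed.

Lemma down_idl (a : L) : idl (fun y => y <= a).
Proof.
split; first exact: le0x.
split; first by move=> x y hx hy; rewrite leUx hx hy.
by move=> x y hy hxy; apply: le_trans hy.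
Qed.
Lemma up_filt (a : L) : filt (fun y => a <= y).
Proof.
split; first exact: lex1.
split; first by move=> x y hx hy; rewrite lexI hx hy.
by move=> x y hy hxy; apply: le_trans hxy.
Qed.

Lemma eL_max (a : L) : is_mpm E cl (eL a).
Proof.
split; first exact: eL_pm.
move=> psi [_ [hord _]] ext f v hv.
case Ef: (sval f a) => [b|].
  by have := ext f b Ef; rewrite hv => -[->].
exfalso; case: v hv => hv.
  have hd : disj (Ft f) (fun y => y <= a).
    move=> y hy hya; have [_ [_ U]] := Ffilt f; have := U _ _ hy hya.
    by rewrite /Ft Ef.
  have [h [hF hI]] := mph_ext (Ffilt f) (@down_idl a) hd.
  have hh : psi h = Some false by apply: ext; apply: hI.
  by have := hord _ _ _ _ (Erel_ofF hF) hv hh.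
have hd : disj (fun y => a <= y) (It f).
  move=> y hay hy; have [_ [_ D]] := Iidl f; have := D _ _ hy hay.
  by rewrite /It Ef.
have [h [hF hI]] := mph_ext (@up_filt a) (Iidl f) hd.
have hh : psi h = Some true by apply: ext; apply: hF.
by have := hord _ _ _ _ (Erel_ofI hI) hh hv.
Qed.

Lemma sep (a b : L) : ~ a <= b -> exists f : X, Ft f a /\ It f b.
Proof.
move=> hab.
have hd : disj (fun y => a <= y) (fun y => y <= b).
  by move=> y h1 h2; apply: hab; apply: le_trans h2.
have [f [hF hI]] := mph_ext (@up_filt a) (@down_idl b) hd.
by exists f; split; [apply: hF|apply: hI].
Qed.

Lemma le_mpm (a b : L) : mpm_le (eL a) (eL b) <-> a <= b.
Proof.
split.
  move=> h; apply: nnpp => hab; have [f [h1 h2]] := sep hab.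
  by have := h f h1; rewrite /eL h2.
move=> hab f hf; have [_ [_ U]] := Ffilt f; exact: U _ _ hf hab.
Qed.

Lemma addpt (phi : X -> option bool) (k : X) (b : bool) : is_mpm E cl phi ->
  (forall x u, phi x = Some u -> (E x k -> u ==> b) /\ (E k x -> b ==> u)) ->
  phi k = Some b.
Proof.
move=> [hpm hmax] H.
case Ek: (phi k) => [b'|].
  have [h1 h2] := H k b' Ek; have := h1 (Erel_refl (f:=k)); have := h2 (Erel_refl (f:=k)).
  by case: b {H h1 h2 Ek}; case: b'.
pose psi := fun x => if pselect (x = k) then Some b else phi x.
have psik : psi k = Some b.
  by rewrite /psi; case: (pselect (k = k)).
have psix : forall x, x <> k -> psi x = phi x.
  by move=> x hx; rewrite /psi; case: (pselect (x = k)).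
have [hA hB] := pm_cl hpm.
have hpsi : forall c x, psi x = Some c <-> (b = c /\ x = k) \/ phi x = Some c.
  move=> c x; case: (pselect (x = k)) => [->|hx].
    rewrite psik Ek; split.
      by case=> ->; left.
    by case=> [[-> _]|].
  rewrite psix //; split; first by right.
  by case=> [[_ hxk]|].
have ppm : is_pm E cl psi.
  apply: pm_of.
  - apply: cl_ext (cl_union (cl_prop (b = true) (cl_single k)) hA) _ => x.
    by apply: iff_sym; apply: hpsi.
  - apply: cl_ext (cl_union (cl_prop (b = false) (cl_single k)) hB) _ => x.
    by apply: iff_sym; apply: hpsi.
  - move=> x y u v hxy /hpsi hu /hpsi hv.
    case: hu => [[hbu hx]|hu]; case: hv => [[hbv hy]|hv].
    + by rewrite -hbu -hbv; apply/implyP.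
    + by rewrite -hbu; rewrite hx in hxy; apply: (proj2 (H y v hv)).
    + by rewrite -hbv; rewrite hy in hxy; apply: (proj1 (H x u hu)).
    + by have [_ [ho _]] := hpm; apply: ho hxy hu hv.
have ext : pext phi psi.
  move=> t x ht; rewrite psix // => htk; by rewrite htk Ek in ht.
have := hmax psi ppm ext k b psik; by rewrite Ek.
Qed.

End Main.

Section Surj.
Variables (d : Order.disp_t) (L : tbLatticeType d).
Local Notation X := (PL L).
Local Notation cl := (@closedL d L).
Local Notation E := (@Erel d L).

Lemma surj (phi : X -> option bool) : is_mpm E cl phi -> exists a : L, forall f, phi f = eL a f.
Proof.
move=> hphi; have [hpm hmax] := hphi.
have [hA hB] := pm_cl hpm.
have [ClA hClA] := cnf hA.
have [ClB hClB] := cnf hB.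
have hord := proj1 (proj2 hpm).
have noedge : forall f g, phi f = Some true -> phi g = Some false -> ~ E f g.
  by move=> f g hf hg he; have := hord f g true false he hf hg.
have c1 : forall f k, phi f = Some true -> psub (Ft f) (Ft k) -> phi k = Some true.
  move=> f k hf hfk; apply: addpt hphi _ => x u hx; split; first by case: u {hx}.
  move=> hkx; case: u hx => hx //; exfalso; apply: (noedge f x hf hx); exact: Erel_F hfk hkx.
have c2 : forall g k, phi g = Some false -> psub (It g) (It k) -> phi k = Some false.
  move=> g k hg hgk; apply: addpt hphi _ => x u hx; split; last by case: u {hx}.
  move=> hxk; case: u hx => hx //; exfalso; apply: (noedge x g hx hg); exact: Erel_I hgk hxk.
pose FF x := forall f, phi f = Some true -> Ft f x.
pose JJ x := forall g, phi g = Some false -> It g x.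
have K1 : forall g, phi g = Some false -> exists x, FF x /\ It g x.
  move=> g hg; apply: nnpp => H.
  have hS : filt (fun s : L => s = \top).
    split => //; split; first by move=> x y -> ->; rewrite meetxx.
    by move=> x y -> h; apply/eqP; rewrite eq_le h lex1.
  have [|k [hk [_ hkI]]] := compact (Cl:=ClA) hS (Iidl g).
    move=> s t -> ht.
    have nF : ~ FF t by move=> hF; apply: H; exists t.
    have [f [hf hft]] : exists f, phi f = Some true /\ ~ Ft f t.
      apply: nnpp => nn; apply: nF => f hf; apply: nnpp => hn; by apply: nn; exists f; split.
    have hd : disj (Ft f) (fun y => y <= t).
      move=> y hy hyt; apply: hft; have [_ [_ U]] := Ffilt f; exact: U _ _ hy hyt.
    have [k [hkF hkI]] := mph_ext (Ffilt f) (@down_idl _ _ t) hd.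
    exists k; split; first by apply/hClA; exact: c1 f k hf hkF.
    split; first by have [? _] := Ffilt k.
    by apply: hkI.
  by apply: (noedge k g (proj2 (hClA k) hk) hg); apply: Erel_ofI.
have K2 : forall f, phi f = Some true -> exists x, JJ x /\ Ft f x.
  move=> f hf; apply: nnpp => H.
  have hT : idl (fun s : L => s = \bot).
    split => //; split; first by move=> x y -> ->; rewrite joinxx.
    by move=> x y -> h; apply/eqP; rewrite eq_le h le0x.
  have [|k [hk [hkF _]]] := compact (Cl:=ClB) (Ffilt f) hT.
    move=> s t hs ->.
    have nJ : ~ JJ s by move=> hJ; apply: H; exists s.
    have [g [hg hgs]] : exists g, phi g = Some false /\ ~ It g s.
      apply: nnpp => nn; apply: nJ => g hg; apply: nnpp => hn; by apply: nn; exists g; split.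
    have hd : disj (fun y => s <= y) (It g).
      move=> y hsy hy; apply: hgs; have [_ [_ D]] := Iidl g; exact: D _ _ hy hsy.
    have [k [hkF hkI]] := mph_ext (@up_filt _ _ s) (Iidl g) hd.
    exists k; split; first by apply/hClB; exact: c2 g k hg hkI.
    split; first by apply: hkF.
    by have [? _] := Iidl k.
  by apply: (noedge f k hf (proj2 (hClB k) hk)); apply: Erel_ofF.
have [a [hFa hJa]] : exists a, FF a /\ JJ a.
  apply: nnpp => H.
  have fF : filt FF.
    split; first by move=> f hf; have [? _] := Ffilt f.
    split.
      by move=> x y hx hy f hf; have [_ [I _]] := Ffilt f; apply: I; [apply: hx|apply: hy].
    by move=> x y hx hxy f hf; have [_ [_ U]] := Ffilt f; apply: U hxy; apply: hx.
  have iJ : idl JJ.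
    split; first by move=> g hg; have [? _] := Iidl g.
    split.
      by move=> x y hx hy g hg; have [_ [U _]] := Iidl g; apply: U; [apply: hx|apply: hy].
    by move=> x y hy hxy g hg; have [_ [_ D]] := Iidl g; apply: D hxy; apply: hy.
  have hd : disj FF JJ by move=> x h1 h2; apply: H; exists x.
  have [h [hF hI]] := mph_ext fF iJ hd.
  have hh : phi h = Some true.
    apply: addpt hphi _ => x u hx; split; first by case: u {hx}.
    move=> hhx; case: u hx => hx //; exfalso.
    have [y [hy hxy]] := K1 x hx.
    by have := hhx y true false (hF y hy) hxy.
  have [y [hy hfy]] := K2 h hh.
  by have := hI y hy; rewrite /It hfy.
have ext : pext phi (eL a) by move=> t [] ht; [apply: hFa|apply: hJa].
have back := hmax _ (eL_pm a) ext.
exists a => f; case Ef: (phi f) => [b|]; first by rewrite (ext _ _ Ef).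
by case Ee: (eL a f) => [b|] //; rewrite (back _ _ Ee) in Ef.
Qed.

End Surj.

Theorem theorem5p3 (d : Order.disp_t) (L : tbLatticeType d) (o : orthocompl L) :
  let MPM := is_mpm (@Erel d L) (@closedL d L) in
  (forall a : L, MPM (eL a)) /\
  (forall a b : L, (forall f, eL a f = eL b f) -> a = b) /\
  (forall phi, MPM phi -> exists a : L, forall f, phi f = eL a f) /\
  (forall a b : L, is_glb MPM (eL a) (eL b) (eL (a `&` b))) /\
  (forall a b : L, is_lub MPM (eL a) (eL b) (eL (a `|` b))) /\
  (forall phi, MPM phi -> mpm_le (eL \bot) phi /\ mpm_le phi (eL \top)) /\
  (forall (a : L) f, eL (ocompl o a) f = pneg (gL o) (eL a) f).
Proof.
move=> MPM.
split; first by move=> a; exact: eL_max.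
split.
  move=> a b h.
  have h1 : a <= b by apply: (proj1 (le_mpm a b)) => f hf; rewrite -h.
  have h2 : b <= a by apply: (proj1 (le_mpm b a)) => f hf; rewrite h.
  by apply: le_anti; rewrite h1 h2.
split; first by move=> phi; exact: surj.
have hle : forall (th : PL L -> option bool) (c : L), (forall f, th f = eL c f) -> forall b : L,
    mpm_le th (eL b) -> c <= b.
  by move=> th c hc b h; apply: (proj1 (le_mpm _ _)) => f; rewrite -hc; apply: h.
have hge : forall (th : PL L -> option bool) (c : L), (forall f, th f = eL c f) -> forall b : L,
    mpm_le (eL b) th -> b <= c.
  by move=> th c hc b h; apply: (proj1 (le_mpm _ _)) => f; rewrite -hc; apply: h.
split.
  move=> a b; split; first exact: eL_max.
  split; first by apply: (proj2 (le_mpm _ _)); apply: leIl.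
  split; first by apply: (proj2 (le_mpm _ _)); apply: leIr.
  move=> th hth h1 h2; have [c hc] := surj hth.
  move=> f; rewrite hc; apply: (proj2 (le_mpm c (a `&` b))).
  by rewrite lexI (hle _ _ hc _ h1) (hle _ _ hc _ h2).
split.
  move=> a b; split; first exact: eL_max.
  split; first by apply: (proj2 (le_mpm _ _)); apply: leUl.
  split; first by apply: (proj2 (le_mpm _ _)); apply: leUr.
  move=> th hth h1 h2; have [c hc] := surj hth.
  move=> f; rewrite hc; apply: (proj2 (le_mpm (a `|` b) c)).
  by rewrite leUx (hge _ _ hc _ h1) (hge _ _ hc _ h2).
split.
  move=> phi _; split.
    by move=> f; have [[h0 _] _] := svalP f; rewrite /eL h0.
  by move=> f _; have [[_ [h1 _]] _] := svalP f; rewrite /eL h1.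
move=> a f; rewrite /pneg /gL /eL /= /gmap.
by case: (sval f (ocompl o a)) => [[]|].
Qed.
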